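(* Let $k,n,r\ge0$ and $i\in\mathbb Z$. The groups $\mathcal D(\underline{\mathbb Z/2})(\Sigma^iH,Y)$ for $Y$ one of the complexes below are as follows, and are zero in all cases not listed: (a) $\mathcal D(\Sigma^iH,A_k)=\mathbb Z/2$ if $0\le i\le k$; (b) $\mathcal D(\Sigma^iH,H(n))=\mathbb Z/2$ if $-n\le i\le 0$; (c) $\mathcal D(\Sigma^iH,H(-1))=0$ for all $i$; (d) for $n\geq2$, $\mathcal D(\Sigma^iH,H(-n))=\mathbb Z/2$ if $0\le i\le n-2$; (e) $\mathcal D(\Sigma^iH,B_r)=\mathbb Z/2$ if $-(r+2)\le i\le-2$.
   Context: A $\underline{\mathbb Z/2}$-module is a pair of $\mathbb F_2$-vector spaces $M_\Theta,M_\bullet$ with maps $t\colon M_\Theta\to M_\Theta$, $p^*\colon M_\bullet\to M_\Theta$, $p_*\colon M_\Theta\to M_\bullet$ with $tp^*=p^*$, $p_*t=p_*$, $t^2=1$, $p^*p_*=1+t$, $p_*p^*=0$. $H$: both spaces $\mathbb F_2$, $t=p^*=\mathrm{id}$, $p_*=0$. $F$: $F_\Theta=\mathbb F_2^2$, $t$ the swap, $F_\bullet=\mathbb F_2$, $p_*(x,y)=x+y$, $p^*(z)=(z,z)$. $p\colon F\to H$, $p\colon H\to F$ the unique nonzero maps, $u=1+t$. Homological grading, $(\Sigma C)_i=C_{i-1}$. $A_k$: $F$ in degrees $k,\dots,0$, differentials $u$. $H(0)=H$ in degree $0$; for $n>0$, $H(-n)$: $H$ in degree $n$, $F$ in degrees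 $n-1,\dots,0$, differentials $p,u,\dots,u$; $H(n)$: $F$ in degrees $0,\dots,-(n-1)$, $H$ in degree $-n$, differentials $u,\dots,u,p$. $B_r$: $H$ in degree $0$, $F$ in degrees $-1,\dots,-(r+1)$, $H$ in degree $-(r+2)$, differentials $p,u,\dots,u,p$. $\mathcal D(X,Y)$ denotes morphisms in the derived category $\mathcal D(\underline{\mathbb Z/2})$ of chain complexes of $\underline{\mathbb Z/2}$-modules. *)

(* Defs.v *)
From mathcomp Require Import all_boot all_algebra.
From mathcomp Require Import zify.
Set Implicit Arguments. Unset Strict Implicit. Unset Printing Implicit Defensive.
Import GRing.Theory.
Local Open Scope ring_scope.

Definition flin (U V : lmodType 'F_2) (f : U -> V) : Prop :=
  forall (a : 'F_2) (x y : U), f (a *: x + y) = a *: f x + f y.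

(* A Z/2-module (Z/2-Mackey functor): M_Theta, M_bullet, t, p^*, p_* *)
Record z2mod := Z2Mod {
  MT : lmodType 'F_2;
  MB : lmodType 'F_2;
  tr : MT -> MT;
  res : MB -> MT;
  tra : MT -> MB;
  tr_lin : flin tr; res_lin : flin res; tra_lin : flin tra;
  tr_res : forall x, tr (res x) = res x;
  tra_tr : forall x, tra (tr x) = tra x;
  tr_tr : forall x, tr (tr x) = x;
  res_tra : forall x, res (tra x) = x + tr x;
  tra_res : forall x, tra (res x) = 0 }.

Record mhom (M N : z2mod) := MHom {
  hT : MT M -> MT N;
  hB : MB M -> MB N;
  hT_lin : flin hT; hB_lin : flin hB;
  hT_tr : forall x, hT (tr x) = tr (hT x);
  hT_res : forall x, hT (res x) = res (hB x);
  hB_tra : forall x, hB (tra x) = tra (hT x) }.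

Definition heq M N (f g : mhom M N) : Prop :=
  (forall x, hT f x = hT g x) /\ (forall x, hB f x = hB g x).

Lemma flin0 (U V : lmodType 'F_2) (f : U -> V) : flin f -> f 0 = 0.
Proof.
move=> lf; have := lf 1 0 0; rewrite scaler0 addr0 scale1r => e.
by apply: (addrI (f 0)); rewrite addr0 -e.
Qed.

Lemma flin_comp (U V W : lmodType 'F_2) (f : U -> V) (g : V -> W) :
  flin f -> flin g -> flin (fun x => g (f x)).
Proof. by move=> lf lg a x y; rewrite lf lg. Qed.

Lemma flin_zero (U V : lmodType 'F_2) : flin (fun _ : U => (0 : V)).
Proof. by move=> a x y; rewrite scaler0 addr0. Qed.

Definition mcomp M N P (g : mhom N P) (f : mhom M N) : mhom M P.
Proof.
refine (@MHom M P (fun x => hT g (hT f x)) (fun x => hB g (hB f x))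
  (flin_comp (hT_lin f) (hT_lin g)) (flin_comp (hB_lin f) (hB_lin g)) _ _ _).
- by move=> x; rewrite hT_tr hT_tr.
- by move=> x; rewrite hT_res hT_res.
- by move=> x; rewrite hB_tra hB_tra.
Defined.

Definition mzero M N : mhom M N.
Proof.
refine (@MHom M N (fun _ => 0) (fun _ => 0) (@flin_zero _ _) (@flin_zero _ _) _ _ _).
- by move=> _; rewrite (flin0 (@tr_lin N)).
- by move=> _; rewrite (flin0 (@res_lin N)).
- by move=> _; rewrite (flin0 (@tra_lin N)).
Defined.

(* Chain complexes, homological grading: dif n : C_(n+1) -> C_n *)
Record cx := Cx {
  obj : int -> z2mod;
  dif : forall n : int, mhom (obj (n + 1)) (obj n);
  dif_dif : forall n : int, heq (mcomp (dif n) (dif (n + 1))) (mzero _ _) }.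

Record cmap (X Y : cx) := CMap {
  cm : forall n : int, mhom (obj X n) (obj Y n);
  cm_comm : forall n : int,
    heq (mcomp (cm n) (dif X n)) (mcomp (dif Y n) (cm (n + 1))) }.

Definition cmcomp (X Y Z : cx) (g : cmap Y Z) (f : cmap X Y) : cmap X Z.
Proof.
refine (@CMap X Z (fun n => mcomp (cm g n) (cm f n)) _).
move=> n; have [fT fB] := cm_comm f n; have [gT gB] := cm_comm g n.
split=> x /=.
- by move: (fT x) (gT (hT (cm f (n + 1)) x)) => /= -> ->.
- by move: (fB x) (gB (hB (cm f (n + 1)) x)) => /= -> ->.
Defined.

Definition homotopic (X Y : cx) (f g : cmap X Y) : Prop :=
  exists h : forall n : int, mhom (obj X n) (obj Y (n + 1)),
  forall n : int,
    (forall x, hT (cm f (n + 1)) x - hT (cm g (n + 1)) x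
               = hT (dif Y (n + 1)) (hT (h (n + 1)) x) + hT (h n) (hT (dif X n) x)) /\
    (forall x, hB (cm f (n + 1)) x - hB (cm g (n + 1)) x
               = hB (dif Y (n + 1)) (hB (h (n + 1)) x) + hB (h n) (hB (dif X n) x)).

(* quasi-isomorphism: induces isomorphisms on homology (computed levelwise,
   at Theta and at bullet), in every degree n+1 *)
Definition qis (X Y : cx) (f : cmap X Y) : Prop :=
  (forall n : int, forall x : MT (obj X (n + 1)),
     hT (dif X n) x = 0 ->
     (exists y, hT (cm f (n + 1)) x = hT (dif Y (n + 1)) y) ->
     exists z, x = hT (dif X (n + 1)) z) /\
  (forall n : int, forall y : MT (obj Y (n + 1)),
     hT (dif Y n) y = 0 ->
     exists x z, hT (dif X n) x = 0 /\ y = hT (cm f (n + 1)) x + hT (dif Y (n + 1)) z) /\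
  (forall n : int, forall x : MB (obj X (n + 1)),
     hB (dif X n) x = 0 ->
     (exists y, hB (cm f (n + 1)) x = hB (dif Y (n + 1)) y) ->
     exists z, x = hB (dif X (n + 1)) z) /\
  (forall n : int, forall y : MB (obj Y (n + 1)),
     hB (dif Y n) y = 0 ->
     exists x z, hB (dif X n) x = 0 /\ y = hB (cm f (n + 1)) x + hB (dif Y (n + 1)) z).

(* A morphism X -> Y in D is represented by a roof X <-s- R -f-> Y with s a qis *)
Record roof (X Y : cx) := Roof {
  rsrc : cx;
  rq : cmap rsrc X;
  rq_qis : qis rq;
  rf : cmap rsrc Y }.

(* equality of roofs in D(X,Y) (calculus of right fractions in K(A)) *)
Definition roof_equiv (X Y : cx) (r1 r2 : roof X Y) : Prop :=
  exists (Z : cx) (u : cmap Z (rsrc r1)) (v : cmap Z (rsrc r2)),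
    qis (cmcomp (rq r1) u) /\
    homotopic (cmcomp (rq r1) u) (cmcomp (rq r2) v) /\
    homotopic (cmcomp (rf r1) u) (cmcomp (rf r2) v).

Definition DHomCard (X Y : cx) (m : nat) : Prop :=
  exists f : 'I_m -> roof X Y,
    (forall i j, roof_equiv (f i) (f j) -> i = j) /\
    (forall r : roof X Y, exists i, roof_equiv r (f i)).

Lemma two_F2 (x : 'F_2) : x + x = 0.
Proof.
have two2 : (2%:R : 'F_2) = 0 by apply/val_inj.
by rewrite -mulr2n -mulr_natr two2 mulr0.
Qed.

Definition F2r : lmodType 'F_2 := ('F_2)^o.
Definition V2 : lmodType 'F_2 := 'rV['F_2]_2.
Definition V0 : lmodType 'F_2 := 'rV['F_2]_0.

Lemma flin_id (U : lmodType 'F_2) : flin (fun x : U => x).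
Proof. by []. Qed.

Definition Hmod : z2mod.
Proof.
refine (@Z2Mod F2r F2r (fun x => x) (fun x => x) (fun _ => 0)
  (@flin_id _) (@flin_id _) (@flin_zero _ _) _ _ _ _ _) => // x.
by rewrite two_F2.
Defined.

Definition swap2 (x : V2) : V2 := \row_(j < 2) x 0 (rev_ord j).
Definition sum2 (x : V2) : F2r := x 0 0 + x 0 1.
Definition diag2 (z : F2r) : V2 := \row_(j < 2) z.

Lemma rev01 : rev_ord (0 : 'I_2) = 1. Proof. exact/val_inj. Qed.
Lemma rev10 : rev_ord (1 : 'I_2) = 0. Proof. exact/val_inj. Qed.

Lemma swap2_lin : flin swap2.
Proof. by move=> a x y; apply/rowP=> j; rewrite !mxE. Qed.
Lemma sum2_lin : flin sum2.
Proof.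
move=> a x y; rewrite /sum2 !mxE /GRing.scale /=.
by rewrite mulrDr addrACA.
Qed.
Lemma diag2_lin : flin diag2.
Proof. by move=> a x y; apply/rowP=> j; rewrite !mxE. Qed.

Lemma swap2K x : swap2 (swap2 x) = x.
Proof. by apply/rowP=> j; rewrite !mxE rev_ordK. Qed.
Lemma swap2_diag z : swap2 (diag2 z) = diag2 z.
Proof. by apply/rowP=> j; rewrite !mxE. Qed.
Lemma sum2_swap x : sum2 (swap2 x) = sum2 x.
Proof. by rewrite /sum2 !mxE rev01 rev10 addrC. Qed.
Lemma sum2_diag z : sum2 (diag2 z) = 0.
Proof. by rewrite /sum2 !mxE two_F2. Qed.
Lemma swap2D x y : swap2 (x + y) = swap2 x + swap2 y.
Proof. by apply/rowP=> j; rewrite !mxE. Qed.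
Lemma sum2D x y : sum2 (x + y) = sum2 x + sum2 y.
Proof. by rewrite /sum2 !mxE addrACA. Qed.

Definition Fmod : z2mod.
Proof.
refine (@Z2Mod V2 F2r swap2 diag2 sum2 swap2_lin diag2_lin sum2_lin _ _ _ _ _).
- by move=> x; apply/rowP=> j; rewrite !mxE.
- by move=> x; rewrite /sum2 !mxE rev01 rev10 addrC.
- by move=> x; apply/rowP=> j; rewrite !mxE rev_ordK.
- move=> x; apply/rowP=> j; rewrite !mxE /sum2.
  case: j => -[|[|//]] ? ; rewrite /=.
  + by congr (_ + _); [congr (x 0 _) | congr (x 0 _)]; apply/val_inj.
  + by rewrite addrC; congr (_ + _); [congr (x 0 _) | congr (x 0 _)]; apply/val_inj.
- by move=> x; rewrite /sum2 !mxE two_F2.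
Defined.

Definition Zmod : z2mod.
Proof.
refine (@Z2Mod V0 V0 (fun _ => 0) (fun _ => 0) (fun _ => 0)
  (@flin_zero _ _) (@flin_zero _ _) (@flin_zero _ _) _ _ _ _ _) => // x.
- by apply/rowP=> -[].
- by rewrite addr0; apply/rowP=> -[].
Defined.

Definition pFH : mhom Fmod Hmod.
Proof.
refine (@MHom Fmod Hmod sum2 (fun _ => 0) sum2_lin (@flin_zero _ _) _ _ _) => /=.
- by move=> x; rewrite /sum2 !mxE rev01 rev10 addrC.
- by move=> x; rewrite /sum2 !mxE two_F2.
- by [].
Defined.

Definition pHF : mhom Hmod Fmod.
Proof.
refine (@MHom Hmod Fmod diag2 (fun x => x) diag2_lin (@flin_id _) _ _ _) => //=.
- by move=> x; apply/rowP=> j; rewrite !mxE.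
- by move=> x; rewrite /sum2 !mxE two_F2.
Defined.

Definition u2 (x : V2) : V2 := x + swap2 x.
Lemma u2_lin : flin u2.
Proof. by move=> a x y; rewrite /u2 swap2_lin scalerDr addrACA. Qed.

Definition uFF : mhom Fmod Fmod.
Proof.
refine (@MHom Fmod Fmod u2 (fun _ => 0) u2_lin (@flin_zero _ _) _ _ _) => /=.
- by move=> x; rewrite /u2 swap2D swap2K addrC.
- by move=> x; rewrite /u2 swap2_diag; apply/rowP=> j; rewrite !mxE two_F2.
- by move=> x; rewrite /u2 sum2D sum2_swap two_F2.
Defined.

Inductive piece := PH | PF | P0.

Definition mod_of (a : piece) : z2mod :=
  match a with PH => Hmod | PF => Fmod | P0 => Zmod end.

Definition std (a b : piece) : mhom (mod_of a) (mod_of b) :=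
  match a as a' return mhom (mod_of a') (mod_of b) with
  | PF => match b as b' return mhom Fmod (mod_of b') with
          | PH => pFH | PF => uFF | P0 => mzero _ _ end
  | PH => match b as b' return mhom Hmod (mod_of b') with
          | PF => pHF | _ => mzero _ _ end
  | P0 => mzero _ _
  end.

Lemma std_dd (a b c : piece) : ~ (a = PF /\ b = PH /\ c = PF) ->
  heq (mcomp (std b c) (std a b)) (mzero _ _).
Proof.
have s0 : sum2 0 = 0 by rewrite /sum2 !mxE addr0.
have d0 : diag2 0 = 0 by apply/rowP=> j; rewrite !mxE.
have u0 : u2 0 = 0 by rewrite /u2 /swap2; apply/rowP=> j; rewrite !mxE addr0.
have tV (v : V2) : v + v = 0 by apply/rowP=> j; rewrite !mxE two_F2.
case: a; case: b; case: c => //= h; split=> x //=;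
  rewrite ?s0 ?d0 ?u0 //.
- exact: sum2_diag.
- by rewrite /u2 swap2_diag tV.
- by case: h.
- by rewrite /u2 sum2D sum2_swap two_F2.
- by rewrite /u2 swap2D swap2K [swap2 x + x]addrC tV.
Qed.

Definition seq_cx_ok (c : int -> piece) : Prop :=
  forall n : int, ~ (c (n + 1 + 1) = PF /\ c (n + 1) = PH /\ c n = PF).

Definition mk_cx (c : int -> piece) (hc : seq_cx_ok c) : cx :=
  @Cx (fun n => mod_of (c n)) (fun n => std (c (n + 1)) (c n))
      (fun n => std_dd (hc n)).

Definition cSH (i : int) (m : int) : piece := if m == i then PH else P0.
Lemma cSH_ok i : seq_cx_ok (cSH i).
Proof. move=> n; rewrite /cSH; repeat case: ifP => ?; by move=> [] ? [] ? ?. Qed.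
Definition SigmaH (i : int) : cx := mk_cx (@cSH_ok i).

Definition cA (k : nat) (m : int) : piece :=
  if (0 <= m) && (m <= k%:Z) then PF else P0.
Lemma cA_ok k : seq_cx_ok (cA k).
Proof. move=> n; rewrite /cA; repeat case: ifP => ?; by move=> [] ? [] ? ?. Qed.
Definition Acx (k : nat) : cx := mk_cx (@cA_ok k).

Definition cHpos (n : nat) (m : int) : piece :=
  if m == - n%:Z then PH
  else if (- n%:Z + 1 <= m) && (m <= 0) then PF else P0.
Lemma cHpos_ok n : seq_cx_ok (cHpos n).
Proof.
move=> k; rewrite /cHpos; repeat case: ifP => ?; move=> [] ? [] ? ?; try discriminate; lia.
Qed.
Definition Hpos (n : nat) : cx := mk_cx (@cHpos_ok n).

Definition cHneg (n : nat) (m : int) : piece :=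
  if m == n%:Z then PH
  else if (0 <= m) && (m <= n%:Z - 1) then PF else P0.
Lemma cHneg_ok n : seq_cx_ok (cHneg n).
Proof.
move=> k; rewrite /cHneg; repeat case: ifP => ?; move=> [] ? [] ? ?; try discriminate; lia.
Qed.
Definition Hneg (n : nat) : cx := mk_cx (@cHneg_ok n).

Definition cB (r : nat) (m : int) : piece :=
  if m == 0 then PH
  else if m == - (r%:Z + 2) then PH
  else if (- (r%:Z + 1) <= m) && (m <= -1) then PF else P0.
Lemma cB_ok r : seq_cx_ok (cB r).
Proof.
move=> k; rewrite /cB; repeat case: ifP => ?; move=> [] ? [] ? ?; try discriminate; lia.
Qed.
Definition Bcx (r : nat) : cx := mk_cx (@cB_ok r).

(* Main.v *)
Require Import Defs.
From mathcomp Require Import all_boot all_algebra.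
From mathcomp Require Import zify.
Set Implicit Arguments. Unset Strict Implicit. Unset Printing Implicit Defensive.
Import GRing.Theory Num.Theory.
Local Open Scope ring_scope.

Arguments cSH : simpl never.

Lemma flinD (U V : lmodType 'F_2) (f : U -> V) : flin f -> forall x y, f (x + y) = f x + f y.
Proof. by move=> lf x y; rewrite -[x in LHS]scale1r lf scale1r. Qed.
Lemma flinZ (U V : lmodType 'F_2) (f : U -> V) : flin f -> forall a x, f (a *: x) = a *: f x.
Proof. by move=> lf a x; rewrite -[a *: x]addr0 lf (flin0 lf) addr0. Qed.
Lemma flinN (U V : lmodType 'F_2) (f : U -> V) : flin f -> forall x, f (- x) = - f x.
Proof. by move=> lf x; rewrite -scaleN1r flinZ // scaleN1r. Qed.
Lemma flinB (U V : lmodType 'F_2) (f : U -> V) : flin f -> forall x y, f (x - y) = f x - f y.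
Proof. by move=> lf x y; rewrite flinD // flinN. Qed.

Lemma hT0 M N (f : mhom M N) : hT f 0 = 0. Proof. exact: flin0 (hT_lin f). Qed.
Lemma hB0 M N (f : mhom M N) : hB f 0 = 0. Proof. exact: flin0 (hB_lin f). Qed.
Lemma hTD M N (f : mhom M N) x y : hT f (x + y) = hT f x + hT f y. Proof. exact: (flinD (hT_lin f) x y). Qed.
Lemma hBD M N (f : mhom M N) x y : hB f (x + y) = hB f x + hB f y. Proof. exact: (flinD (hB_lin f) x y). Qed.
Lemma hTB M N (f : mhom M N) x y : hT f (x - y) = hT f x - hT f y. Proof. exact: (flinB (hT_lin f) x y). Qed.
Lemma hBB M N (f : mhom M N) x y : hB f (x - y) = hB f x - hB f y. Proof. exact: (flinB (hB_lin f) x y). Qed.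
Lemma hTZ M N (f : mhom M N) a x : hT f (a *: x) = a *: hT f x. Proof. exact: (flinZ (hT_lin f) a x). Qed.
Lemma hBZ M N (f : mhom M N) a x : hB f (a *: x) = a *: hB f x. Proof. exact: (flinZ (hB_lin f) a x). Qed.
Lemma resZ (M : z2mod) a (x : MB M) : res (a *: x) = a *: res x. Proof. exact: (flinZ (@res_lin M) a x). Qed.
Lemma resB (M : z2mod) (x y : MB M) : res (x - y) = res x - res y. Proof. exact: (flinB (@res_lin M) x y). Qed.
Lemma res0 (M : z2mod) : res (0 : MB M) = 0. Proof. exact: flin0 (@res_lin M). Qed.

Lemma zB (c : piece) : c = P0 -> forall x : MB (mod_of c), x = 0.
Proof. by move-> => x; apply/rowP => -[]. Qed.
Lemma zT (c : piece) : c = P0 -> forall x : MT (mod_of c), x = 0.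
Proof. by move-> => x; apply/rowP => -[]. Qed.

Definition coefB (c : piece) : MB (mod_of c) -> 'F_2 :=
  match c return MB (mod_of c) -> 'F_2 with
  | PH => fun a => a | PF => fun a => a | P0 => fun _ => 0 end.
Definition coefT (c : piece) : MT (mod_of c) -> 'F_2 :=
  match c return MT (mod_of c) -> 'F_2 with
  | PH => fun a => a | PF => fun _ => 0 | P0 => fun _ => 0 end.
Definition oneB (c : piece) : MB (mod_of c) :=
  match c return MB (mod_of c) with
  | PH => (1 : 'F_2) | PF => (1 : 'F_2) | P0 => 0 end.

Lemma decompB c : c <> P0 -> forall a : MB (mod_of c), coefB a *: oneB c = a.
Proof. by case: c => // _ a /=; rewrite /GRing.scale /= mulr1. Qed.
Lemma coefB_one c : c <> P0 -> coefB (oneB c) = 1.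
Proof. by case: c. Qed.
Lemma coefB0 c : coefB (0 : MB (mod_of c)) = 0.
Proof. by case: c. Qed.
Lemma HT_id c : c = PH -> forall a : MT (mod_of c), coefT a *: res (oneB c) = a.
Proof. by move-> => a /=; rewrite /GRing.scale /= mulr1. Qed.

Definition Hmap (M : z2mod) (y : MB M) : mhom Hmod M.
Proof.
refine (@MHom Hmod M (fun a : F2r => (a : 'F_2) *: res y) (fun a : F2r => (a : 'F_2) *: y) _ _ _ _ _).
- by move=> a x z; rewrite scalerDl scalerA.
- by move=> a x z; rewrite scalerDl scalerA.
- by move=> x /=; rewrite (flinZ (@tr_lin M)) tr_res.
- by move=> x /=; rewrite resZ.
- by move=> x /=; rewrite (flinZ (@tra_lin M)) tra_res scaler0 scale0r.
Defined.

Definition pmap (c : piece) (M : z2mod) (y : MB M) : mhom (mod_of c) M :=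
  match c return mhom (mod_of c) M with
  | PH => Hmap y | _ => mzero _ _ end.
Arguments pmap : simpl never.

Lemma pmapT c M (y : MB M) : c = PH -> forall a : MT (mod_of c), hT (pmap c y) a = coefT a *: res y.
Proof. by move-> => a. Qed.
Lemma pmapB c M (y : MB M) : c = PH -> forall a : MB (mod_of c), hB (pmap c y) a = coefB a *: y.
Proof. by move-> => a. Qed.

Lemma cSH_H n : cSH (n + 1) (n + 1) = PH. Proof. by rewrite /cSH eqxx. Qed.
Lemma cSH_n n : cSH (n + 1) n = P0.
Proof. rewrite /cSH; case: eqP => // ?; lia. Qed.
Lemma cSH_2 n : cSH (n + 1) (n + 1 + 1) = P0.
Proof. rewrite /cSH; case: eqP => // ?; lia. Qed.
Lemma cSH_m n m : m != n -> cSH (n + 1) (m + 1) = P0.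
Proof. move=> H; rewrite /cSH; case: eqP => // ?; lia. Qed.

Definition castB (R : cx) (d m : int) (x : MB (obj R d)) : MB (obj R m) :=
  match @eqP _ d m with
  | ReflectT e => eq_rect d (fun k => MB (obj R k)) x m e
  | ReflectF _ => 0 end.
Arguments castB : simpl never.

Lemma castB_id (R : cx) d x : @castB R d d x = x.
Proof.
rewrite /castB; case: eqP => // e.
by rewrite (eq_irrelevance e (erefl d)).
Qed.

Definition ptmap (n : int) (R : cx) (x : MB (obj R (n + 1))) (hx : hB (dif R n) x = 0) :
  cmap (SigmaH (n + 1)) R.
Proof.
refine (@CMap (SigmaH (n + 1)) R (fun m => pmap (cSH (n + 1) m) (@castB R (n + 1) m x)) _).
move=> m; case: (eqVneq m n) => [->|ne]; split => a /=.
- rewrite (zT (cSH_n n) (hT _ a)) hT0 (pmapT _ (cSH_H n)) castB_id hTZ hT_res hx res0.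
  by rewrite scaler0.
- rewrite (zB (cSH_n n) (hB _ a)) hB0 (pmapB _ (cSH_H n)) castB_id hBZ hx.
  by rewrite scaler0.
- by rewrite (zT (cSH_m ne) a) !hT0.
- by rewrite (zB (cSH_m ne) a) !hB0.
Defined.

Lemma ptmapT n R x hx (a : MT (obj (SigmaH (n + 1)) (n + 1))) :
  hT (cm (@ptmap n R x hx) (n + 1)) a = coefT a *: res x.
Proof. by rewrite /= (pmapT _ (cSH_H n)) castB_id. Qed.
Lemma ptmapB n R x hx (a : MB (obj (SigmaH (n + 1)) (n + 1))) :
  hB (cm (@ptmap n R x hx) (n + 1)) a = coefB a *: x.
Proof. by rewrite /= (pmapB _ (cSH_H n)) castB_id. Qed.

Definition idm (M : z2mod) : mhom M M.
Proof. by refine (@MHom M M (fun x => x) (fun x => x) (@flin_id _) (@flin_id _) _ _ _). Defined.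

Definition cmid (X : cx) : cmap X X.
Proof. by refine (@CMap X X (fun m => idm _) _) => m; split. Defined.

Definition eX n : MB (obj (SigmaH (n + 1)) (n + 1)) := oneB (cSH (n + 1) (n + 1)).

Lemma qis_idX n (g : cmap (SigmaH (n + 1)) (SigmaH (n + 1))) :
  (forall a, hT (cm g (n + 1)) a = a) -> (forall a, hB (cm g (n + 1)) a = a) -> qis g.
Proof.
move=> gT gB; split; [|split; [|split]] => m; case: (eqVneq m n) => [->|ne].
- move=> x _ [y hy]; exists 0; rewrite hT0 -(gT x) hy.
  by rewrite (zT (cSH_2 n) y) hT0.
- by move=> x _ _; exists 0; rewrite hT0 (zT (cSH_m ne) x).
- by move=> y dy; exists y, 0; rewrite hT0 addr0 gT.
- by move=> y dy; exists 0, 0; rewrite (zT (cSH_m ne) y) !hT0 addr0.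
- move=> x _ [y hy]; exists 0; rewrite hB0 -(gB x) hy.
  by rewrite (zB (cSH_2 n) y) hB0.
- by move=> x _ _; exists 0; rewrite hB0 (zB (cSH_m ne) x).
- by move=> y dy; exists y, 0; rewrite hB0 addr0 gB.
- by move=> y dy; exists 0, 0; rewrite (zB (cSH_m ne) y) !hB0 addr0.
Qed.

Lemma qis_cmid n : qis (cmid (SigmaH (n + 1))).
Proof. exact: qis_idX. Qed.

Definition Rel n (Y : cx) (r : roof (SigmaH (n + 1)) Y) (y : MB (obj Y (n + 1))) : Prop :=
  exists x : MB (obj (rsrc r) (n + 1)),
    hB (dif (rsrc r) n) x = 0 /\ hB (cm (rq r) (n + 1)) x = eX n /\
    exists z, hB (cm (rf r) (n + 1)) x - y = hB (dif Y (n + 1)) z.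

Lemma L0 n (R : cx) (s : cmap R (SigmaH (n + 1))) : qis s ->
  exists x, hB (dif R n) x = 0 /\ hB (cm s (n + 1)) x = eX n.
Proof.
case=> _ [_ [_ q4]].
have [x [z [dx ey]]] := q4 n (eX n) (zB (cSH_n n) _).
exists x; split => //.
by rewrite ey (zB (cSH_2 n) z) hB0 addr0.
Qed.

Lemma cyc_map (R Y : cx) (f : cmap R Y) n x : hB (dif R n) x = 0 -> hB (dif Y n) (hB (cm f (n + 1)) x) = 0.
Proof. by move=> dx; have := (cm_comm f n).2 x => /= <-; rewrite dx hB0. Qed.

Lemma map_bd (R Y : cx) (f : cmap R Y) n z :
  hB (cm f (n + 1)) (hB (dif R (n + 1)) z) = hB (dif Y (n + 1)) (hB (cm f (n + 1 + 1)) z).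
Proof. exact: (cm_comm f (n + 1)).2 z. Qed.

Lemma Luniq n (R Y : cx) (s : cmap R (SigmaH (n + 1))) (f : cmap R Y) : qis s ->
  forall x1 x2, hB (dif R n) x1 = 0 -> hB (dif R n) x2 = 0 ->
  hB (cm s (n + 1)) x1 = hB (cm s (n + 1)) x2 ->
  exists z, hB (cm f (n + 1)) x1 - hB (cm f (n + 1)) x2 = hB (dif Y (n + 1)) z.
Proof.
case=> _ [_ [q3 _]] x1 x2 d1 d2 e12.
have c12 : hB (dif R n) (x1 - x2) = 0 by rewrite hBB d1 d2 subrr.
have b12 : exists y, hB (cm s (n + 1)) (x1 - x2) = hB (dif (SigmaH (n + 1)) (n + 1)) y.
  by exists 0; rewrite hBB e12 subrr hB0.
have [z hz] := q3 n (x1 - x2) c12 b12.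
by exists (hB (cm f (n + 1 + 1)) z); rewrite -hBB hz map_bd.
Qed.

Lemma zid (V : zmodType) (a b y1 y2 : V) : y1 - y2 = (a - b) - (a - y1) + (b - y2).
Proof.
by rewrite opprB (addrC (a - b)) (addrA (y1 - a) a) subrK (addrA (y1 - b) b) subrK.
Qed.

Lemma Rel_exists n Y (r : roof (SigmaH (n + 1)) Y) :
  exists y, hB (dif Y n) y = 0 /\ Rel r y.
Proof.
have [x [dx sx]] := L0 (rq_qis r).
exists (hB (cm (rf r) (n + 1)) x); split; first exact: cyc_map.
by exists x; split => //; split => //; exists 0; rewrite subrr hB0.
Qed.

Lemma Rel_uniq n Y (r : roof (SigmaH (n + 1)) Y) y1 y2 :
  Rel r y1 -> Rel r y2 -> exists z, y1 - y2 = hB (dif Y (n + 1)) z.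
Proof.
move=> [x1 [d1 [s1 [z1 h1]]]] [x2 [d2 [s2 [z2 h2]]]].
have [z3 h3] := Luniq (rf r) (rq_qis r) d1 d2 (etrans s1 (esym s2)).
exists (z3 - z1 + z2); rewrite hBD hBB -h1 -h2 -h3; exact: zid.
Qed.

Lemma Rel_shift n Y (r : roof (SigmaH (n + 1)) Y) y y' w :
  Rel r y -> y - y' = hB (dif Y (n + 1)) w -> Rel r y'.
Proof.
move=> [x [dx [sx [z hz]]]] hw; exists x; split => //; split => //.
exists (z + w); rewrite hBD -hz -hw.
by rewrite addrA subrK.
Qed.

Lemma hBN M N (f : mhom M N) x : hB f (- x) = - hB f x. Proof. exact: (flinN (hB_lin f) x). Qed.
Lemma hTz M N x : hT (mzero M N) x = 0. Proof. by []. Qed.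
Lemma hBz M N x : hB (mzero M N) x = 0. Proof. by []. Qed.

Lemma zid2 (V : zmodType) (a b c : V) : b - c = - (a - b) - (c - a).
Proof. by rewrite !opprB (addrA (b - a) a) subrK. Qed.

Lemma fcompT n (R Y : cx) (f : cmap R Y) x dx (a : MT (obj (SigmaH (n + 1)) (n + 1))) :
  hT (cm (cmcomp f (@ptmap n R x dx)) (n + 1)) a = coefT a *: res (hB (cm f (n + 1)) x).
Proof.
change (hT (cm f (n + 1)) (hT (cm (ptmap dx) (n + 1)) a) = coefT a *: res (hB (cm f (n + 1)) x)).
by rewrite ptmapT hTZ hT_res.
Qed.
Lemma fcompB n (R Y : cx) (f : cmap R Y) x dx (a : MB (obj (SigmaH (n + 1)) (n + 1))) :
  hB (cm (cmcomp f (@ptmap n R x dx)) (n + 1)) a = coefB a *: hB (cm f (n + 1)) x.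
Proof.
change (hB (cm f (n + 1)) (hB (cm (ptmap dx) (n + 1)) a) = coefB a *: hB (cm f (n + 1)) x).
by rewrite ptmapB hBZ.
Qed.

Lemma compT n (R : cx) (s : cmap R (SigmaH (n + 1))) x dx : hB (cm s (n + 1)) x = eX n ->
  forall a, hT (cm (cmcomp s (@ptmap n R x dx)) (n + 1)) a = a.
Proof. by move=> sx a; rewrite fcompT sx /eX HT_id // cSH_H. Qed.
Lemma compB n (R : cx) (s : cmap R (SigmaH (n + 1))) x dx : hB (cm s (n + 1)) x = eX n ->
  forall a, hB (cm (cmcomp s (@ptmap n R x dx)) (n + 1)) a = a.
Proof. by move=> sx a; rewrite fcompB sx /eX decompB // cSH_H. Qed.

Lemma Rel_equiv n Y (r1 r2 : roof (SigmaH (n + 1)) Y) y :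
  roof_equiv r1 r2 -> Rel r1 y -> Rel r2 y.
Proof.
move=> [Z [u [v [q [[h hh] [h' hh']]]]]] hr.
have [w [dw sw]] := L0 q.
have dx1 := cyc_map u dw; have dx2 := cyc_map v dw.
have s2x2 : hB (cm (rq r2) (n + 1)) (hB (cm v (n + 1)) w) = eX n.
  have := (hh n).2 w => /=.
  rewrite dw hB0 addr0 (zB (cSH_2 n) (hB (h (n + 1)) w)) hB0.
  move/eqP; rewrite subr_eq0 => /eqP <-; exact: sw.
have R1 : Rel r1 (hB (cm (rf r1) (n + 1)) (hB (cm u (n + 1)) w)).
  by exists (hB (cm u (n + 1)) w); split => //; split => //; exists 0; rewrite subrr hB0.
have [z4 h4] := Rel_uniq hr R1.
have := (hh' n).2 w => /=; rewrite dw hB0 addr0 => h5.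
exists (hB (cm v (n + 1)) w); split => //; split => //.
exists (- hB (h' (n + 1)) w - z4).
by rewrite hBB hBN -h5 -h4; apply: zid2.
Qed.

Lemma Rel_conv n Y (r1 r2 : roof (SigmaH (n + 1)) Y) y :
  Rel r1 y -> Rel r2 y -> roof_equiv r1 r2.
Proof.
move=> [x1 [d1 [s1 [z1 h1]]]] [x2 [d2 [s2 [z2 h2]]]].
have hz : hB (cm (rf r1) (n + 1)) x1 - hB (cm (rf r2) (n + 1)) x2 = hB (dif Y (n + 1)) (z1 - z2).
  by rewrite hBB -h1 -h2 opprB (addrA (_ - y) y) subrK.
exists (SigmaH (n + 1)), (ptmap d1), (ptmap d2); split; [|split].
- exact: qis_idX (compT _ s1) (compB _ s1).
- exists (fun m => mzero _ _) => m; case: (eqVneq m n) => [->|ne]; split => a.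
  + by rewrite (compT _ s1) (compT _ s2) subrr /= hT0 addr0.
  + by rewrite (compB _ s1) (compB _ s2) subrr /= hB0 addr0.
  + by rewrite (zT (cSH_m ne) a) !hT0 subrr addr0.
  + by rewrite (zB (cSH_m ne) a) !hB0 subrr addr0.
- exists (fun m => pmap (cSH (n + 1) m) (@castB Y (n + 1 + 1) (m + 1) (z1 - z2))) => m.
  case: (eqVneq m n) => [->|ne]; split => a.
  + rewrite (zT (cSH_n n) (hT (dif _ n) a)) hT0 addr0 (pmapT _ (cSH_H n)) castB_id.
    by rewrite !fcompT hTZ hT_res -scalerBr -resB hz.
  + rewrite (zB (cSH_n n) (hB (dif _ n) a)) hB0 addr0 (pmapB _ (cSH_H n)) castB_id.
    by rewrite !fcompB hBZ -scalerBr hz.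
  + by rewrite (zT (cSH_m ne) a) !hT0 subrr addr0.
  + by rewrite (zB (cSH_m ne) a) !hB0 subrr addr0.
Qed.

Definition Hzero (Y : cx) n := forall y : MB (obj Y (n + 1)),
  hB (dif Y n) y = 0 -> exists z, y = hB (dif Y (n + 1)) z.
Definition Hone (Y : cx) n := exists y1 : MB (obj Y (n + 1)),
  hB (dif Y n) y1 = 0 /\ (forall z, y1 <> hB (dif Y (n + 1)) z) /\
  forall y, hB (dif Y n) y = 0 ->
    (exists z, y = hB (dif Y (n + 1)) z) \/ (exists z, y - y1 = hB (dif Y (n + 1)) z).

Definition ry n Y (y : MB (obj Y (n + 1))) (hy : hB (dif Y n) y = 0) : roof (SigmaH (n + 1)) Y :=
  @Roof _ _ (SigmaH (n + 1)) (cmid _) (qis_cmid n) (ptmap hy).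

Lemma Rel_ry n Y y (hy : hB (dif Y n) y = 0) : Rel (ry hy) y.
Proof.
exists (eX n); split; first exact: (zB (cSH_n n)).
split; first by [].
exists 0; rewrite hB0.
change (hB (cm (ptmap hy) (n + 1)) (eX n) - y = 0).
by rewrite ptmapB /eX coefB_one ?cSH_H // scale1r subrr.
Qed.

Lemma key1 n Y : Hzero Y n -> DHomCard (SigmaH (n + 1)) Y 1.
Proof.
move=> HZ; have h0 : hB (dif Y n) 0 = 0 := hB0 _.
exists (fun _ => ry h0); split.
  by move=> i j _; rewrite (ord1 i) (ord1 j).
move=> r; exists ord0; have [y [dy Ry]] := Rel_exists r; have [w hw] := HZ y dy.
apply: (@Rel_conv _ _ _ _ 0); last exact: Rel_ry.
by apply: (Rel_shift Ry); rewrite subr0; exact: hw.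
Qed.

Lemma key2 n Y : Hone Y n -> DHomCard (SigmaH (n + 1)) Y 2.
Proof.
move=> [y1 [dy1 [nb tri]]]; have h0 : hB (dif Y n) 0 = 0 := hB0 _.
pose f := fun i : 'I_2 => if val i == 0%N then ry h0 else ry dy1.
have Rf : forall i, Rel (f i) (if val i == 0%N then 0 else y1).
  by move=> i; rewrite /f; case: ifP => _; apply: Rel_ry.
exists f; split.
  move=> i j E; have [z hz] := Rel_uniq (Rel_equiv E (Rf i)) (Rf j).
  clear E; move: hz; case: i => [[|[|//]] Hi]; case: j => [[|[|//]] Hj] /= hz;
    try by apply/val_inj.
  - by exfalso; apply: (nb (- z)); rewrite hBN -hz sub0r opprK.
  - by exfalso; apply: (nb z); rewrite -hz subr0.
move=> r; have [y [dy Ry]] := Rel_exists r.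
case: (tri y dy) => [[w hw]|[w hw]].
- exists ord0; apply: (@Rel_conv _ _ _ _ 0); last exact: (Rf ord0).
  by apply: (Rel_shift Ry); rewrite subr0; exact: hw.
- exists (Ordinal (isT : (1 < 2)%N)); apply: (@Rel_conv _ _ _ _ y1); last exact: (Rf (Ordinal (isT : (1 < 2)%N))).
  exact: (Rel_shift Ry hw).
Qed.

Lemma stdB0 a b : ~ (a = PH /\ b = PF) -> forall z, hB (std a b) z = 0.
Proof. by case: a; case: b => H z //; exfalso; apply: H. Qed.

Lemma Hzero_any (c : int -> piece) (hc : seq_cx_ok c) n :
  c (n + 1) = P0 \/ (c (n + 1) = PH /\ c n = PF) \/ (c (n + 1 + 1) = PH /\ c (n + 1) = PF) ->
  Hzero (mk_cx hc) n.
Proof.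
case=> [E|[[E1 E2]|[E1 E2]]] y dy.
- by exists 0; rewrite hB0 (zB E y).
- exists 0; rewrite hB0; move: y dy; change (forall y : MB (mod_of (c (n + 1))),
    hB (std (c (n + 1)) (c n)) y = 0 -> y = 0).
  by rewrite E1 E2.
- move: y {dy}; change (forall y : MB (mod_of (c (n + 1))),
    exists z : MB (mod_of (c (n + 1 + 1))), y = hB (std (c (n + 1 + 1)) (c (n + 1))) z).
  by rewrite E1 E2 => y; exists y.
Qed.

Lemma Hone_mk (c : int -> piece) (hc : seq_cx_ok c) n :
  c (n + 1) <> P0 -> ~ (c (n + 1) = PH /\ c n = PF) ->
  ~ (c (n + 1 + 1) = PH /\ c (n + 1) = PF) -> Hone (mk_cx hc) n.
Proof.
move=> N0 N1 N2; exists (oneB (c (n + 1))); split; first exact: (stdB0 N1).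
split.
  move=> z hz; have := coefB_one N0.
  rewrite hz.
  change (coefB (hB (std (c (n + 1 + 1)) (c (n + 1))) z) = 1 -> False).
  rewrite (stdB0 N2) coefB0 => /eqP; by rewrite eq_sym oner_eq0.
move=> y _; have [E|E] : coefB y = 0 \/ coefB y = 1.
  by case: (coefB y) => -[|[|//]] ? ; [left|right]; apply/val_inj.
- by left; exists 0; rewrite hB0 -(decompB N0 y) E scale0r.
- by right; exists 0; rewrite hB0 -(decompB N0 y) E scale1r subrr.
Qed.

Lemma int_pred (i : int) : exists n, i = n + 1.
Proof. by exists (i - 1); rewrite subrK. Qed.

Ltac solve_piece :=
  repeat case: ifP => ?; first [ done | (by case) | (exfalso; lia) ].
Ltac solve_disj :=
  repeat case: ifP => ?; first [ by left | by right; left | by right; right | exfalso; lia ].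

Theorem proposition4p22 :
  (forall (k : nat) (i : int),
     DHomCard (SigmaH i) (Acx k) (if (0 <= i) && (i <= k%:Z) then 2%N else 1%N)) /\
  (forall (n : nat) (i : int),
     DHomCard (SigmaH i) (Hpos n) (if (- n%:Z <= i) && (i <= 0) then 2%N else 1%N)) /\
  (forall i : int, DHomCard (SigmaH i) (Hneg 1) 1%N) /\
  (forall n : nat, (2 <= n)%N -> forall i : int,
     DHomCard (SigmaH i) (Hneg n) (if (0 <= i) && (i <= n%:Z - 2) then 2%N else 1%N)) /\
  (forall (r : nat) (i : int),
     DHomCard (SigmaH i) (Bcx r)
       (if (- (r%:Z + 2) <= i) && (i <= -2) then 2%N else 1%N)).
Proof.
split; [|split; [|split; [|split]]].
- move=> k i; have [j ->] := int_pred i; case: ifP => H.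
  + by apply: key2; apply: Hone_mk; rewrite /cA; solve_piece.
  + by apply: key1; apply: Hzero_any; rewrite /cA; solve_disj.
- move=> N i; have [j ->] := int_pred i; case: ifP => H.
  + by apply: key2; apply: Hone_mk; rewrite /cHpos; solve_piece.
  + by apply: key1; apply: Hzero_any; rewrite /cHpos; solve_disj.
- move=> i; have [j ->] := int_pred i.
  by apply: key1; apply: Hzero_any; rewrite /cHneg; solve_disj.
- move=> N HN i; have [j ->] := int_pred i; case: ifP => H.
  + by apply: key2; apply: Hone_mk; rewrite /cHneg; solve_piece.
  + by apply: key1; apply: Hzero_any; rewrite /cHneg; solve_disj.
- move=> r i; have [j ->] := int_pred i; case: ifP => H.
  + by apply: key2; apply: Hone_mk; rewrite /cB; solve_piece.
  + by apply: key1; apply: Hzero_any; rewrite /cB; solve_disj.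
Qed.
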